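(* Let $\lambda=(\lambda_1,\dots,\lambda_r)$ be a partition of $n\ge1$. The Sprague–Grundy value $\mathbb{SG}(\mathcal{D}(\lambda))$ can be computed in $O(\log r)\le O(\log n)$ time units.
   Context: A partition of $n$ is a non-increasing sequence $\lambda_1\ge\dots\ge\lambda_r>0$ of integers with sum $n$, given as input as the list $(\lambda_1,\dots,\lambda_r)$ with random access to its entries. For non-negative $i,j$, $\lambda[i,j]$ is $(\lambda_{i+1}-j,\dots,\lambda_r-j)$ with all non-positive entries removed. Downright: positions $\mathcal{D}(\mu)$, $\mu$ nonempty with $s$ parts; move to $\mathcal{D}(\mu[1,0])$ allowed iff $s>1$, move to $\mathcal{D}(\mu[0,1])$ allowed iff $\mu_1>1$. Normal play; $\mathbb{SG}(A)=\operatorname{mex}\{\mathbb{SG}(B):A\to B\}$. A time unit is any of: reading one integer (entry) of the input, one basic arithmetic operation on integers (addition, subtraction, multiplication or division by 2, parity, comparison), or computing the mex of a set of at most two integers from $\{0,1,2\}$. *)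

(* Defs.v *)
From Stdlib Require Import List ZArith Arith Lia.
Import ListNotations.

Definition is_partition (n : nat) (lam : list nat) : Prop :=
  (forall x, In x lam -> 0 < x) /\
  (forall i, S i < length lam -> nth (S i) lam 0 <= nth i lam 0) /\
  list_sum lam = n.

Definition shift10 (mu : list nat) : list nat := tl mu.
Definition shift01 (mu : list nat) : list nat :=
  filter (fun x => Nat.ltb 0 x) (map (fun x => x - 1) mu).

Fixpoint mex_from (k fuel : nat) (l : list nat) : nat :=
  match fuel with
  | 0 => k
  | S f => if existsb (Nat.eqb k) l then mex_from (S k) f l else k
  end.
Definition mex (l : list nat) : nat := mex_from 0 (S (length l)) l.

Definition options (g : list nat -> nat) (mu : list nat) : list nat :=
  (if Nat.ltb 1 (length mu) then [g (shift10 mu)] else []) ++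
  (if Nat.ltb 1 (hd 0 mu) then [g (shift01 mu)] else []).

(* Grundy value with fuel; every move strictly decreases the sum of
   parts, so fuel = sum of parts suffices. *)
Fixpoint sg_fuel (fuel : nat) (mu : list nat) : nat :=
  match fuel with
  | 0 => 0
  | S f => mex (options (sg_fuel f) mu)
  end.

Definition SG (mu : list nat) : nat := sg_fuel (list_sum mu) mu.

(* Cost model: a register machine (unit-cost RAM) whose every         *)
(* instruction costs one time unit.  The program is a fixed finite    *)
(* list of instructions; registers hold integers.                     *)

Inductive instr : Type :=
| IConst  (d : nat) (c : Z)
| IMov    (d a : nat)
| IRead   (d a : nat)                (* R[d] := lambda_{R[a]} (1-based; 0 if out of range) *)
| IAdd    (d a b : nat)
| ISub    (d a b : nat)
| IMul    (d a b : nat)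
| IHalf   (d a : nat)
| IDouble (d a : nat)
| IParity (d a : nat)
| IMex0   (d : nat)
| IMex1   (d a : nat)
| IMex2   (d a b : nat)
| IJlt    (a b l : nat)
| IJeq    (a b l : nat)
| IJmp    (l : nat)
| IHalt   (a : nat).

Definition regs := nat -> Z.

Definition upd (R : regs) (d : nat) (v : Z) : regs :=
  fun i => if Nat.eqb i d then v else R i.

Definition mexZ (l : list Z) : Z :=
  Z.of_nat (mex (map Z.to_nat (filter (fun z => Z.leb 0 z) l))).

Definition read_entry (lam : list nat) (v : Z) : Z :=
  if Z.ltb 0 v then Z.of_nat (nth (Z.to_nat v - 1) lam 0) else 0%Z.

Fixpoint run (p : list instr) (lam : list nat) (fuel pc : nat) (R : regs)
  : option Z :=
  match fuel with
  | 0 => None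
  | S f =>
    match nth_error p pc with
    | None => None
    | Some i =>
      match i with
      | IConst d c    => run p lam f (S pc) (upd R d c)
      | IMov d a      => run p lam f (S pc) (upd R d (R a))
      | IRead d a     => run p lam f (S pc) (upd R d (read_entry lam (R a)))
      | IAdd d a b    => run p lam f (S pc) (upd R d (R a + R b)%Z)
      | ISub d a b    => run p lam f (S pc) (upd R d (R a - R b)%Z)
      | IMul d a b    => run p lam f (S pc) (upd R d (R a * R b)%Z)
      | IHalf d a     => run p lam f (S pc) (upd R d (Z.div (R a) 2))
      | IDouble d a   => run p lam f (S pc) (upd R d (2 * R a)%Z)
      | IParity d a   => run p lam f (S pc) (upd R d (Z.modulo (R a) 2))
      | IMex0 d       => run p lam f (S pc) (upd R d (mexZ []))
      | IMex1 d a     => run p lam f (S pc) (upd R d (mexZ [R a]))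
      | IMex2 d a b   => run p lam f (S pc) (upd R d (mexZ [R a; R b]))
      | IJlt a b l    => run p lam f (if Z.ltb (R a) (R b) then l else S pc) R
      | IJeq a b l    => run p lam f (if Z.eqb (R a) (R b) then l else S pc) R
      | IJmp l        => run p lam f l R
      | IHalt a       => Some (R a)
      end
    end
  end.

Definition init_regs (r n : nat) : regs :=
  fun i => match i with 0 => Z.of_nat r | 1 => Z.of_nat n | _ => 0%Z end.

(* Main.v *)
Require Import Defs.
From Stdlib Require Import List ZArith Arith Lia.
Import ListNotations.

Lemma finite_diag (Acond Bcond lenA hdB : bool) (a b v c t x y : nat):
 (Acond = true -> lenA = true) ->
 a = mex ((if lenA then [c] else []) ++ [v]) ->
 b = mex ([v] ++ (if hdB then [t] else [])) ->
 v = mex ((if Acond then [x] else []) ++ (if Bcond then [y] else [])) ->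
 (Acond = true -> a = x) -> (Bcond = true -> b = y) ->
 mex [a;b] = v.
Proof.
  intros HL Ha Hb Hv HA HB.
  destruct Acond, Bcond.
  - rewrite (HA eq_refl), (HB eq_refl), Hv; reflexivity.
  - specialize (HA eq_refl). rewrite HA. simpl in Hv. rewrite Hb, Hv.
    destruct hdB; destruct x as [|[|x]]; try destruct t as [|[|t]]; reflexivity.
  - specialize (HB eq_refl). rewrite HB. simpl in Hv. rewrite Ha, Hv.
    destruct lenA; destruct y as [|[|y]]; try destruct c as [|[|c]]; reflexivity.
  - simpl in Hv. rewrite Ha, Hb, Hv.
    destruct lenA, hdB; try destruct c as [|[|c]]; try destruct t as [|[|t]]; reflexivity.
Qed.

Definition NI (l : list nat) := forall i j, i <= j -> nth j l 0 <= nth i l 0.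
Definition Pt (l : list nat) := Forall (fun x => 0 < x) l /\ NI l.

Lemma NI_tl l : NI l -> NI (tl l).
Proof. intros H i j Hij. destruct l; simpl; [destruct i, j; auto|]. apply (H (S i) (S j)); lia. Qed.

Lemma NI_cons x l : NI (x :: l) -> NI l.
Proof. intro H. apply (NI_tl _ H). Qed.

Lemma filter_nth l i : NI l -> nth i (filter (fun x => Nat.ltb 0 x) l) 0 = nth i l 0.
Proof.
  revert i; induction l as [|x l IH]; intros i H; simpl; [destruct i; auto|].
  destruct (Nat.ltb_spec 0 x).
  - destruct i; simpl; auto. apply IH. exact (NI_cons _ _ H).
  - assert (Hz : forall k, nth k (x :: l) 0 = 0).
    { intro k. specialize (H 0 k ltac:(lia)). change (nth 0 (x :: l) 0) with x in H. lia. }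
    rewrite IH by exact (NI_cons _ _ H).
    pose proof (Hz (S i)) as H1. simpl in H1. rewrite H1. 
    pose proof (Hz i). auto.
Qed.

Lemma nth_map_pred l i : nth i (map (fun x => x - 1) l) 0 = nth i l 0 - 1.
Proof. revert i; induction l; intros [|i]; simpl; auto. Qed.

Lemma NI_map_pred l : NI l -> NI (map (fun x => x - 1) l).
Proof.
  intros H i j Hij. rewrite !nth_map_pred. specialize (H i j Hij). lia.
Qed.

Lemma nth_shift01 l i : NI l -> nth i (shift01 l) 0 = nth i l 0 - 1.
Proof.
  intro H. unfold shift01. rewrite filter_nth by (apply NI_map_pred; auto).
  apply nth_map_pred.
Qed.

Lemma nth_shift10 l i : nth i (shift10 l) 0 = nth (S i) l 0.
Proof. destruct l; simpl; auto; destruct i; auto. Qed.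

Lemma NI_shift01 l : NI l -> NI (shift01 l).
Proof. intros H i j Hij. rewrite !nth_shift01 by auto. specialize (H i j Hij). lia. Qed.

Lemma Pt_shift01 l : Pt l -> Pt (shift01 l).
Proof.
  intros [H1 H2]. split; [|apply NI_shift01; auto].
  apply Forall_forall. intros x Hx. unfold shift01 in Hx. apply filter_In in Hx.
  destruct Hx as [_ Hx]. apply Nat.ltb_lt in Hx; auto.
Qed.

Lemma Pt_shift10 l : Pt l -> Pt (shift10 l).
Proof.
  intros [H1 H2]. split; [|apply NI_tl; auto].
  destruct l; simpl; auto. inversion H1; auto.
Qed.

Lemma Pt_len l k : Pt l -> (k < length l <-> 0 < nth k l 0).
Proof.
  intros [H1 _]. split; intro H.
  - rewrite Forall_forall in H1. apply H1. apply nth_In; auto.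
  - destruct (Nat.lt_ge_cases k (length l)); auto. rewrite nth_overflow in H; lia.
Qed.

Lemma sum_shift01 l : Forall (fun x => 0 < x) l -> list_sum (shift01 l) + length l = list_sum l.
Proof.
  induction l as [|x l IH]; intro H; simpl; auto. inversion H; subst.
  unfold shift01 in *. simpl. destruct (Nat.ltb_spec 0 (x - 1)); simpl; rewrite <- IH by auto; lia.
Qed.

Lemma FI : forall f1 l f2, Forall (fun x => 0 < x) l -> list_sum l <= f1 -> list_sum l <= f2 ->
  sg_fuel f1 l = sg_fuel f2 l.
Proof.
  induction f1 as [|f1 IH]; intros l f2 Hp H1 H2.
  - destruct l as [|x l]; [|inversion Hp; simpl in H1; lia].
    destruct f2; reflexivity.
  - destruct f2 as [|f2].
    + destruct l as [|x l]; [reflexivity|inversion Hp; simpl in H2; lia].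
    + simpl. f_equal. unfold options.
      destruct l as [|x l]; [reflexivity|]. inversion Hp; subst.
      f_equal.
      * destruct (Nat.ltb 1 (length (x :: l))); auto. f_equal.
        simpl in *. apply IH; auto; lia.
      * destruct (Nat.ltb_spec 1 (hd 0 (x :: l))); auto. f_equal.
        pose proof (sum_shift01 (x :: l) Hp). simpl in *.
        apply IH; auto; try lia.
        apply Forall_forall. intros y Hy. unfold shift01 in Hy. apply filter_In in Hy.
        destruct Hy as [_ Hy]. apply Nat.ltb_lt in Hy; auto.
Qed.

Lemma SG_eq l : Forall (fun x => 0 < x) l -> SG l = mex (options SG l).
Proof.
  intro Hp. unfold SG. destruct l as [|x l]; [reflexivity|].
  inversion Hp; subst.
  remember (list_sum (x :: l)) as N. destruct N as [|f]; [simpl in HeqN; lia|].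
  simpl sg_fuel. f_equal. unfold options. f_equal.
  - destruct (Nat.ltb 1 (length (x :: l))); auto. f_equal.
    simpl in *. apply FI; auto; lia.
  - destruct (Nat.ltb_spec 1 (hd 0 (x :: l))); auto. f_equal.
    pose proof (sum_shift01 (x :: l) Hp). simpl in *.
    apply FI; try lia.
    apply Forall_forall. intros y Hy. unfold shift01 in Hy. apply filter_In in Hy.
    destruct Hy as [_ Hy]. apply Nat.ltb_lt in Hy; auto.
Qed.

Lemma hd_nth l : hd 0 l = nth 0 l 0.
Proof. destruct l; reflexivity. Qed.

Lemma shift_comm l : 2 <= hd 0 l -> shift10 (shift01 l) = shift01 (shift10 l).
Proof.
  destruct l as [|x l]; simpl; intro H; [lia|]. unfold shift01; simpl.
  destruct (Nat.ltb_spec 0 (x - 1)); [reflexivity|lia].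
Qed.

Lemma ltb_true a b : a < b -> Nat.ltb a b = true.
Proof. apply Nat.ltb_lt. Qed.

Lemma Pt_pos l : Pt l -> Forall (fun x => 0 < x) l.
Proof. intros [H _]; exact H. Qed.

Lemma Pt_NI l : Pt l -> NI l.
Proof. intros [_ H]; exact H. Qed.

Lemma sum_shift10 l : Pt l -> l <> [] -> list_sum (shift10 l) < list_sum l.
Proof. intros [H _] Hn. destruct l; [congruence|]. inversion H; subst. simpl; lia. Qed.

Lemma sum_shift01_lt l : Pt l -> l <> [] -> list_sum (shift01 l) < list_sum l.
Proof. intros [H _] Hn. pose proof (sum_shift01 l H). destruct l; [congruence|]. simpl in *; lia. Qed.

Lemma ne_of_nth l k : 0 < nth k l 0 -> l <> [].
Proof. destruct l; [destruct k; simpl; lia|congruence]. Qed.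

Lemma M1 : forall N l, list_sum l < N -> Pt l -> 2 <= nth 1 l 0 ->
  SG l = SG (shift01 (shift10 l)).
Proof.
  induction N as [|N IH]; intros l Hs Hp H2; [lia|].
  set (A := shift10 l). set (B := shift01 l). set (v := shift01 A).
  assert (HNI := Pt_NI _ Hp).
  assert (H01 : nth 1 l 0 <= nth 0 l 0) by (apply HNI; lia).
  assert (HpA : Pt A) by (apply Pt_shift10; auto).
  assert (HpB : Pt B) by (apply Pt_shift01; auto).
  assert (Hpv : Pt v) by (apply Pt_shift01; auto).
  assert (Hne : l <> []) by (apply (ne_of_nth l 1); lia).
  assert (HsA : list_sum A < N) by (pose proof (sum_shift10 l Hp Hne); unfold A; lia).
  assert (HsB : list_sum B < N) by (pose proof (sum_shift01_lt l Hp Hne); unfold B; lia).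
  assert (nA : forall i, nth i A 0 = nth (S i) l 0) by (intro; apply nth_shift10).
  assert (nB : forall i, nth i B 0 = nth i l 0 - 1) by (intro; apply nth_shift01; auto).
  assert (nv : forall i, nth i v 0 = nth (S i) l 0 - 1)
    by (intro; unfold v; rewrite nth_shift01 by apply (Pt_NI _ HpA); rewrite nA; auto).
  assert (hdA : 2 <= hd 0 A) by (rewrite hd_nth, nA; lia).
  assert (hdB : Nat.ltb 1 (hd 0 B) = Nat.ltb 1 (hd 0 B)) by reflexivity.
  assert (EB : shift10 B = v).
  { unfold B, v, A. apply shift_comm. rewrite hd_nth; lia. }
  rewrite (SG_eq l (Pt_pos _ Hp)). unfold options.
  rewrite (ltb_true 1 (length l)) by (apply Pt_len; auto; lia).
  rewrite (ltb_true 1 (hd 0 l)) by (rewrite hd_nth; lia).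
  fold A B. simpl app.
  apply (finite_diag (Nat.ltb 1 (length v)) (Nat.ltb 1 (hd 0 v)) (Nat.ltb 1 (length A))
           (Nat.ltb 1 (hd 0 B)) _ _ _ (SG (shift10 A)) (SG (shift01 B))
           (SG (shift10 v)) (SG (shift01 v))).
  - intro H. apply Nat.ltb_lt in H. apply Nat.ltb_lt.
    apply Pt_len in H; auto. apply Pt_len; auto. rewrite nv in H. rewrite nA. lia.
  - rewrite (SG_eq A (Pt_pos _ HpA)). unfold options.
    rewrite (ltb_true 1 (hd 0 A)) by lia. reflexivity.
  - rewrite (SG_eq B (Pt_pos _ HpB)). unfold options.
    rewrite (ltb_true 1 (length B)) by (apply Pt_len; auto; rewrite nB; lia).
    rewrite EB. reflexivity.
  - apply SG_eq, Pt_pos; auto.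
  - intro H. apply Nat.ltb_lt in H. apply Pt_len in H; auto. rewrite nv in H.
    rewrite (IH A HsA HpA) by (rewrite nA; lia).
    unfold v. rewrite shift_comm by auto. reflexivity.
  - intro H. apply Nat.ltb_lt in H. rewrite hd_nth, nv in H.
    rewrite (IH B HsB HpB) by (rewrite nB; lia).
    rewrite EB. reflexivity.
Qed.

Lemma Forall_pos_repeat k : Forall (fun x => 0 < x) (repeat 1 k).
Proof. induction k; simpl; auto. Qed.

Lemma shift01_repeat1 k : shift01 (repeat 1 k) = [].
Proof. induction k; auto. Qed.

Definition par (m : nat) : nat := if Nat.odd m then 1 else 0.

Lemma par_S m : par (S m) = mex [par m].
Proof.
  unfold par. rewrite Nat.odd_succ, <- Nat.negb_odd. destruct (Nat.odd m); reflexivity.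
Qed.

Lemma SG_row m : SG [S m] = par m.
Proof.
  induction m.
  - reflexivity.
  - rewrite SG_eq by (constructor; [lia|constructor]). unfold options. simpl length. simpl hd.
    rewrite (ltb_true 1 (S (S m))) by lia. unfold shift01. simpl.
    replace (m - 0) with m by lia. rewrite IHm, par_S. reflexivity.
Qed.

Lemma SG_col k : SG (repeat 1 (S k)) = par k.
Proof.
  induction k.
  - reflexivity.
  - rewrite SG_eq by apply Forall_pos_repeat. unfold options. simpl length. simpl hd.
    rewrite (ltb_true 1 (S (S (length (repeat 1 k))))) by lia.
    change (shift10 (repeat 1 (S (S k)))) with (repeat 1 (S k)).
    rewrite IHk, par_S. reflexivity.
Qed.

Lemma all1_repeat t : (forall k, k < length t -> nth k t 0 = 1) -> t = repeat 1 (length t).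
Proof.
  induction t as [|x t IH]; intro H; simpl; auto.
  pose proof (H 0 ltac:(simpl; lia)) as H0. simpl in H0. subst. f_equal.
  apply IH. intros k Hk. apply (H (S k)). simpl; lia.
Qed.

Lemma hook_shape H : Pt H -> H <> [] -> nth 1 H 0 <= 1 ->
  H = nth 0 H 0 :: repeat 1 (length H - 1).
Proof.
  intros Hp Hn H1. destruct H as [|h t]; [congruence|]. simpl. replace (length t - 0) with (length t) by lia.
  f_equal. apply all1_repeat. intros k Hk.
  assert (0 < nth (S k) (h :: t) 0) by (apply Pt_len; auto; simpl; lia).
  assert (nth (S k) (h :: t) 0 <= nth 1 (h :: t) 0) by (apply (Pt_NI _ Hp); lia).
  simpl in *. lia.
Qed.

Definition F (a l : nat) : nat :=
  mex ((if Nat.ltb 0 l then [par (l-1)] else []) ++ (if Nat.ltb 0 a then [par (a-1)] else [])).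

Lemma shift01_SS a t : shift01 (S (S a) :: t) = S a :: shift01 t.
Proof. unfold shift01; simpl. replace (a - 0) with a by lia. reflexivity. Qed.

Lemma SG_hook a l : SG (S a :: repeat 1 l) = F a l.
Proof.
  rewrite SG_eq by (constructor; [lia|apply Forall_pos_repeat]).
  unfold options, F. simpl length. rewrite repeat_length. simpl hd. f_equal. f_equal.
  - destruct l as [|l]; [reflexivity|].
    rewrite (ltb_true 1 (S (S l))) by lia. rewrite (ltb_true 0 (S l)) by lia.
    change (shift10 (S a :: repeat 1 (S l))) with (repeat 1 (S l)).
    rewrite SG_col. simpl. replace (l - 0) with l by lia. reflexivity.
  - destruct a as [|a]; [reflexivity|].
    rewrite (ltb_true 1 (S (S a))) by lia. rewrite (ltb_true 0 (S a)) by lia.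
    rewrite shift01_SS, shift01_repeat1, SG_row. simpl. replace (a - 0) with a by lia. reflexivity.
Qed.

Definition D (l : list nat) := shift01 (shift10 l).

Lemma Pt_D l : Pt l -> Pt (D l).
Proof. intro; apply Pt_shift01, Pt_shift10; auto. Qed.

Lemma nth_D l i : Pt l -> nth i (D l) 0 = nth (S i) l 0 - 1.
Proof. intro Hp. unfold D. rewrite nth_shift01 by (apply Pt_NI, Pt_shift10; auto). rewrite nth_shift10. auto. Qed.

Lemma Pt_iterD k l : Pt l -> Pt (Nat.iter k D l).
Proof. induction k; simpl; auto. intro; apply Pt_D; auto. Qed.

Lemma nth_iterD k l i : Pt l -> nth i (Nat.iter k D l) 0 = nth (i + k) l 0 - k.
Proof.
  revert i; induction k; intros i Hp; simpl.
  - rewrite Nat.add_0_r. lia.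
  - rewrite nth_D by (apply Pt_iterD; auto). rewrite IHk by auto.
    replace (S i + k) with (i + S k) by lia. lia.
Qed.

Lemma SG_iterD k l : Pt l -> (forall j, j < k -> j + 2 <= nth (j + 1) l 0) ->
  SG l = SG (Nat.iter k D l).
Proof.
  induction k; intros Hp H; simpl; auto.
  rewrite IHk by (auto; intros; apply H; lia).
  apply (M1 (S (list_sum (Nat.iter k D l)))); auto. apply Pt_iterD; auto.
  rewrite nth_iterD by auto. specialize (H k ltac:(lia)). replace (1 + k) with (k + 1) by lia. lia.
Qed.

Lemma SG_formula lam d L : Pt lam -> 1 <= d -> d <= nth (d-1) lam 0 -> nth d lam 0 < d + 1 ->
  d <= L -> d <= nth (L-1) lam 0 -> nth L lam 0 < d ->
  SG lam = F (nth (d-1) lam 0 - d) (L - d).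
Proof.
  intros Hp H1 Hd Hd' HL HL1 HL2.
  assert (HNI := Pt_NI _ Hp).
  rewrite (SG_iterD (d-1) lam Hp).
  2:{ intros j Hj. assert (nth (d-1) lam 0 <= nth (j+1) lam 0) by (apply HNI; lia). lia. }
  set (H := Nat.iter (d-1) D lam).
  assert (HpH : Pt H) by (apply Pt_iterD; auto).
  assert (nH : forall i, nth i H 0 = nth (i + (d-1)) lam 0 - (d-1)) by (intro; apply nth_iterD; auto).
  assert (Hne : H <> []) by (apply (ne_of_nth H 0); rewrite nH; simpl; lia).
  rewrite (hook_shape H HpH Hne) by (rewrite nH; replace (1 + (d-1)) with d by lia; lia).
  rewrite nH. simpl (0 + (d-1)).
  replace (nth (d-1) lam 0 - (d-1)) with (S (nth (d-1) lam 0 - d)) by lia.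
  rewrite SG_hook. f_equal.
  assert (length H = L - d + 1); [|lia].
  assert (A1 : L - d < length H).
  { apply Pt_len; auto. rewrite nH. replace (L - d + (d-1)) with (L-1) by lia. lia. }
  assert (A2 : ~ (L - d + 1 < length H)).
  { rewrite Pt_len by auto. rewrite nH. replace (L - d + 1 + (d-1)) with L by lia. lia. }
  lia.
Qed.
Definition prog : list instr := [
 IConst 9 1; IConst 6 1; IConst 7 0; IConst 8 0; IConst 2 1; IAdd 3 0 9;
 ISub 5 3 2; IJeq 5 9 18; IAdd 4 2 3; IHalf 4 4; IRead 5 4; IMul 11 6 4; IAdd 11 11 7;
 IJlt 5 11 16; IMov 2 4; IJmp 6; IMov 3 4; IJmp 6;
 IJeq 8 9 25; IMov 10 2; IConst 6 0; IMov 7 2; IConst 8 1; IAdd 3 0 9; IJmp 6;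
 IRead 12 10; ISub 12 12 10; ISub 13 2 10; IConst 14 0;
 ISub 15 12 9; IParity 15 15; ISub 16 13 9; IParity 16 16;
 IJeq 12 14 39; IJeq 13 14 37; IMex2 17 16 15; IHalt 17; IMex1 17 15; IHalt 17;
 IJeq 13 14 42; IMex1 17 16; IHalt 17; IMex0 17; IHalt 17].

Definition reach lam N pc R pc' R' := forall f, run prog lam (N + f) pc R = run prog lam f pc' R'.

Lemma reach_trans lam N1 N2 pc1 R1 pc2 R2 pc3 R3 :
  reach lam N1 pc1 R1 pc2 R2 -> reach lam N2 pc2 R2 pc3 R3 -> reach lam (N1 + N2) pc1 R1 pc3 R3.
Proof. intros H1 H2 f. rewrite <- Nat.add_assoc, H1, H2. reflexivity. Qed.

Ltac stepc := cbn -[upd Z.sub Z.add Z.mul Z.div Z.eqb Z.ltb read_entry Z.modulo mexZ].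
Ltac updc := cbv beta iota fix delta [upd Nat.eqb].


Lemma upd_ext R1 R2 d v : (forall i, R1 i = R2 i) -> forall i, upd R1 d v i = upd R2 d v i.
Proof. intros H i. unfold upd. destruct (Nat.eqb i d); auto. Qed.

Lemma run_ext p lam f : forall pc R1 R2, (forall i, R1 i = R2 i) -> run p lam f pc R1 = run p lam f pc R2.
Proof.
  induction f as [|f IH]; intros pc R1 R2 H; simpl; auto.
  destruct (nth_error p pc) as [i|]; auto.
  destruct i; rewrite ?H; try reflexivity; try (apply IH; apply upd_ext; auto); try (apply IH; auto).
Qed.

Lemma seg1 lam R f : run prog lam (2 + f) 6 R =
  run prog lam f (if Z.eqb (Z.sub (R 3) (R 2)) (R 9) then 18 else 8) (upd R 5 (Z.sub (R 3) (R 2))).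
Proof. stepc. unfold upd at 1 2. cbv beta iota fix delta [Nat.eqb]. reflexivity. Qed.

Definition Rloop lam (R : regs) : regs :=
  let m := Z.div (Z.add (R 2) (R 3)) 2 in
  upd (upd (upd R 4 m) 5 (read_entry lam m)) 11 (Z.add (Z.mul (R 6) m) (R 7)).

Lemma seg2 lam R f : run prog lam (6 + f) 8 R =
  run prog lam f (if Z.ltb (Rloop lam R 5) (Rloop lam R 11) then 16 else 14) (Rloop lam R).
Proof.
  stepc.
  match goal with |- run _ _ _ (if Z.ltb (?X 5) (?X 11) then _ else _) ?X = _ =>
    assert (HX : forall i, X i = Rloop lam R i) end.
  { intro i. unfold Rloop, upd.
    destruct (Nat.eqb_spec i 11); [subst; reflexivity|].
    destruct (Nat.eqb_spec i 5); [subst; reflexivity|].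
    destruct (Nat.eqb_spec i 4); reflexivity. }
  rewrite (HX 5), (HX 11). apply run_ext. exact HX.
Qed.

Lemma seg3 lam R f : run prog lam (2 + f) 14 R = run prog lam f 6 (upd R 2 (R 4)).
Proof. stepc. reflexivity. Qed.

Lemma seg4 lam R f : run prog lam (2 + f) 16 R = run prog lam f 6 (upd R 3 (R 4)).
Proof. stepc. reflexivity. Qed.

Lemma divZ lo hi : ((Z.of_nat lo + Z.of_nat hi) / 2)%Z = Z.of_nat ((lo + hi) / 2).
Proof. rewrite <- Nat2Z.inj_add. rewrite Nat2Z.inj_div. reflexivity. Qed.

Lemma read_nat lam k : 1 <= k -> read_entry lam (Z.of_nat k) = Z.of_nat (nth (k-1) lam 0).
Proof.
  intro H. unfold read_entry. rewrite Nat2Z.id.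
  replace (Z.ltb 0 (Z.of_nat k)) with true by (symmetry; apply Z.ltb_lt; lia). reflexivity.
Qed.

Lemma cond_eq lam lo hi B T : 1 <= (lo + hi) / 2 ->
  Z.ltb (read_entry lam ((Z.of_nat lo + Z.of_nat hi) / 2))
        (Z.of_nat B * ((Z.of_nat lo + Z.of_nat hi) / 2) + Z.of_nat T)
  = Nat.ltb (nth ((lo + hi) / 2 - 1) lam 0) (B * ((lo + hi) / 2) + T).
Proof.
  intro H. rewrite divZ, read_nat by auto.
  destruct (Nat.ltb_spec (nth ((lo + hi) / 2 - 1) lam 0) (B * ((lo + hi) / 2) + T)).
  - apply Z.ltb_lt. lia.
  - apply Z.ltb_ge. lia.
Qed.

Definition Pk lam B T k := B * k + T <= nth (k-1) lam 0.

Lemma Rloop4 lam R : Rloop lam R 4 = Z.div (Z.add (R 2) (R 3)) 2.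
Proof. reflexivity. Qed.
Lemma Rloop5 lam R : Rloop lam R 5 = read_entry lam (Z.div (Z.add (R 2) (R 3)) 2).
Proof. reflexivity. Qed.
Lemma Rloop11 lam R : Rloop lam R 11 = Z.add (Z.mul (R 6) (Z.div (Z.add (R 2) (R 3)) 2)) (R 7).
Proof. reflexivity. Qed.
Lemma Rloop_other lam R i : i <> 4 -> i <> 5 -> i <> 11 -> Rloop lam R i = R i.
Proof.
  intros. unfold Rloop, upd. destruct (Nat.eqb_spec i 11); [lia|].
  destruct (Nat.eqb_spec i 5); [lia|]. destruct (Nat.eqb_spec i 4); [lia|]. reflexivity.
Qed.

Lemma upd_same R d v : upd R d v d = v.
Proof. unfold upd. rewrite Nat.eqb_refl. reflexivity. Qed.
Lemma upd_other R d v i : i <> d -> upd R d v i = R i.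
Proof. intro H. unfold upd. destruct (Nat.eqb_spec i d); [lia|reflexivity]. Qed.

Lemma exit_step lam R : Z.sub (R 3) (R 2) = R 9 -> reach lam 2 6 R 18 (upd R 5 (Z.sub (R 3) (R 2))).
Proof. intros H f. rewrite seg1, H, Z.eqb_refl. reflexivity. Qed.

Lemma iter_step lam R : Z.sub (R 3) (R 2) <> R 9 ->
  let R1 := Rloop lam (upd R 5 (Z.sub (R 3) (R 2))) in
  reach lam 10 6 R 6 (if Z.ltb (R1 5) (R1 11) then upd R1 3 (R1 4) else upd R1 2 (R1 4)).
Proof.
  intros H R1 f. change (10 + f) with (2 + (6 + (2 + f))).
  rewrite seg1. apply Z.eqb_neq in H. rewrite H. rewrite seg2. fold R1.
  destruct (Z.ltb (R1 5) (R1 11)); [apply seg4|apply seg3].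
Qed.

Lemma loop lam B T (Hmono : forall j k, 1 <= j -> j <= k -> Pk lam B T k -> Pk lam B T j) :
  forall K lo hi R, 1 <= lo -> lo < hi -> hi - lo <= 2 ^ K ->
  R 2 = Z.of_nat lo -> R 3 = Z.of_nat hi -> R 9 = 1%Z -> R 6 = Z.of_nat B -> R 7 = Z.of_nat T ->
  Pk lam B T lo -> (forall k, hi <= k -> ~ Pk lam B T k) ->
  exists N R' lo', N <= 10 * K + 2 /\ reach lam N 6 R 18 R' /\ R' 2 = Z.of_nat lo' /\
    Pk lam B T lo' /\ ~ Pk lam B T (lo' + 1) /\
    (forall i, i <> 2 -> i <> 3 -> i <> 4 -> i <> 5 -> i <> 11 -> R' i = R i).
Proof.
  induction K as [|K IH]; intros lo hi R H1 H2 H3 HR2 HR3 HR9 HR6 HR7 HP HQ.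
  - exists 2, (upd R 5 (Z.sub (R 3) (R 2))), lo. simpl in H3. repeat split.
    + lia.
    + apply exit_step. rewrite HR2, HR3, HR9. lia.
    + unfold upd. simpl. auto.
    + auto.
    + apply HQ. lia.
    + intros i Hi2 Hi3 Hi4 Hi5 Hi11. unfold upd. destruct (Nat.eqb_spec i 5); [lia|auto].
  - destruct (Nat.eq_dec hi (lo + 1)) as [Heq|Hne].
    + exists 2, (upd R 5 (Z.sub (R 3) (R 2))), lo. repeat split.
      * lia.
      * apply exit_step. rewrite HR2, HR3, HR9. lia.
      * unfold upd. simpl. auto.
      * auto.
      * apply HQ. lia.
      * intros i Hi2 Hi3 Hi4 Hi5 Hi11. unfold upd. destruct (Nat.eqb_spec i 5); [lia|auto].
    + set (mid := (lo + hi) / 2).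
      assert (Hm1 : lo < mid) by (unfold mid; apply Nat.div_le_lower_bound; lia).
      assert (Hm2 : mid < hi) by (unfold mid; apply Nat.Div0.div_lt_upper_bound; lia).
      assert (Hmid : 1 <= (lo + hi) / 2) by (fold mid; lia).
      assert (Hneq : Z.sub (R 3) (R 2) <> R 9) by (rewrite HR2, HR3, HR9; lia).
      pose proof (iter_step lam R Hneq) as Hit. cbv zeta in Hit.
      set (R1 := Rloop lam (upd R 5 (Z.sub (R 3) (R 2)))) in Hit.
      assert (E2 : forall i, i <> 4 -> i <> 5 -> i <> 11 -> R1 i = R i).
      { intros i Hi4 Hi5 Hi11. unfold R1. rewrite Rloop_other by auto. apply upd_other; auto. }
      assert (E4 : R1 4 = Z.of_nat mid).
      { unfold R1. rewrite Rloop4, !upd_other by lia. rewrite HR2, HR3. apply divZ. }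
      assert (Ec : Z.ltb (R1 5) (R1 11) = Nat.ltb (nth (mid - 1) lam 0) (B * mid + T)).
      { unfold R1. rewrite Rloop5, Rloop11, !upd_other by lia. rewrite HR2, HR3, HR6, HR7.
        apply cond_eq; auto. }
      rewrite Ec in Hit.
      destruct (Nat.ltb_spec (nth (mid - 1) lam 0) (B * mid + T)) as [Hc|Hc].
      * assert (Hg : mid - lo <= 2 ^ K).
        { assert (hi - lo <= 2 * 2 ^ K) by (simpl in H3; lia).
          unfold mid. assert ((lo + hi) / 2 <= (lo + lo + 2 * 2^K) / 2) by (apply Nat.Div0.div_le_mono; lia).
          replace (lo + lo + 2 * 2^K) with ((lo + 2^K) * 2) in H0 by lia. rewrite Nat.div_mul in H0; lia. }
        assert (HQ2 : forall k, mid <= k -> ~ Pk lam B T k).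
        { intros k Hk HPk. apply (Hmono mid k) in HPk; try lia. unfold Pk in HPk. lia. }
        destruct (IH lo mid (upd R1 3 (R1 4)) H1 Hm1 Hg) as (N & R' & lo' & HN & Hr & HR'2 & HP' & HQ' & HE);
          try (rewrite upd_same, E4; reflexivity); try (rewrite upd_other, E2 by lia; assumption); auto.
        exists (10 + N), R', lo'. repeat split; auto; try lia.
        -- apply (reach_trans _ _ _ _ _ _ _ _ _ Hit Hr).
        -- intros i Hi2 Hi3 Hi4 Hi5 Hi11. rewrite HE by auto. rewrite upd_other, E2 by auto. reflexivity.
      * assert (Hg : hi - mid <= 2 ^ K).
        { assert (hi - lo <= 2 * 2 ^ K) by (simpl in H3; lia).
          unfold mid. 
          assert (2 * ((lo + hi) / 2) + (lo + hi) mod 2 = lo + hi) by (symmetry; apply Nat.div_mod; lia).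
          assert ((lo + hi) mod 2 < 2) by (apply Nat.mod_upper_bound; lia). lia. }
        assert (HPm : Pk lam B T mid) by (unfold Pk; lia).
        destruct (IH mid hi (upd R1 2 (R1 4)) ltac:(lia) Hm2 Hg) as (N & R' & lo' & HN & Hr & HR'2 & HP' & HQ' & HE);
          try (rewrite upd_same, E4; reflexivity); try (rewrite upd_other, E2 by lia; assumption); auto.
        exists (10 + N), R', lo'. repeat split; auto; try lia.
        -- apply (reach_trans _ _ _ _ _ _ _ _ _ Hit Hr).
        -- intros i Hi2 Hi3 Hi4 Hi5 Hi11. rewrite HE by auto. rewrite upd_other, E2 by auto. reflexivity.
Qed.

Lemma seg_init lam R : exists R1, reach lam 6 0 R 6 R1 /\ R1 2 = 1%Z /\ R1 3 = Z.add (R 0) 1 /\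
  R1 9 = 1%Z /\ R1 6 = 1%Z /\ R1 7 = 0%Z /\ R1 8 = 0%Z /\ R1 0 = R 0.
Proof. eexists. split; [intro f; stepc; reflexivity|]. repeat split; reflexivity. Qed.

Lemma seg5 lam R f : run prog lam (1 + f) 18 R = run prog lam f (if Z.eqb (R 8) (R 9) then 25 else 19) R.
Proof. reflexivity. Qed.

Lemma seg6 lam R : exists R1, reach lam 6 19 R 6 R1 /\ R1 2 = R 2 /\ R1 3 = Z.add (R 0) (R 9) /\
  R1 9 = R 9 /\ R1 6 = 0%Z /\ R1 7 = R 2 /\ R1 8 = 1%Z /\ R1 0 = R 0 /\ R1 10 = R 2.
Proof. eexists. split; [intro f; stepc; reflexivity|]. repeat split; reflexivity. Qed.

Lemma seg7 lam R : exists R1, reach lam 8 25 R 33 R1 /\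
  R1 12 = Z.sub (read_entry lam (R 10)) (R 10) /\ R1 13 = Z.sub (R 2) (R 10) /\ R1 14 = 0%Z /\
  R1 15 = Z.modulo (Z.sub (Z.sub (read_entry lam (R 10)) (R 10)) (R 9)) 2 /\
  R1 16 = Z.modulo (Z.sub (Z.sub (R 2) (R 10)) (R 9)) 2.
Proof. eexists. split; [intro f; stepc; reflexivity|]. repeat split; reflexivity. Qed.

Lemma mexZ_nat l : mexZ (map Z.of_nat l) = Z.of_nat (mex l).
Proof.
  unfold mexZ. f_equal. f_equal. induction l as [|x l IH]; simpl; auto.
  replace (Z.leb 0 (Z.of_nat x)) with true by (symmetry; apply Z.leb_le; lia).
  simpl. rewrite Nat2Z.id, IH. reflexivity.
Qed.

Lemma seg_final lam R a l x y f :
  R 12 = Z.of_nat a -> R 13 = Z.of_nat l -> R 14 = 0%Z -> R 15 = Z.of_nat x -> R 16 = Z.of_nat y ->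
  run prog lam (4 + f) 33 R =
  Some (Z.of_nat (mex ((if Nat.ltb 0 l then [y] else []) ++ (if Nat.ltb 0 a then [x] else [])))).
Proof.
  intros H12 H13 H14 H15 H16.
  change (4 + f) with (S (3 + f)).
  change (run prog lam (S (3 + f)) 33 R) with
    (run prog lam (3 + f) (if Z.eqb (R 12) (R 14) then 39 else 34) R).
  rewrite H12, H14. destruct a as [|a].
  - change (Z.eqb (Z.of_nat 0) 0) with true; change (if true then 39 else 34) with 39. change (3 + f) with (S (2 + f)).
    change (run prog lam (S (2 + f)) 39 R) with
      (run prog lam (2 + f) (if Z.eqb (R 13) (R 14) then 42 else 40) R).
    rewrite H13, H14. destruct l as [|l].
    + change (Z.eqb (Z.of_nat 0) 0) with true. reflexivity.
    + replace (Z.eqb (Z.of_nat (S l)) 0) with false by (symmetry; apply Z.eqb_neq; lia).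
      stepc. rewrite H16. change [Z.of_nat y] with (map Z.of_nat [y]). rewrite mexZ_nat. reflexivity.
  - replace (Z.eqb (Z.of_nat (S a)) 0) with false by (symmetry; apply Z.eqb_neq; lia).
    change (3 + f) with (S (2 + f)).
    change (run prog lam (S (2 + f)) 34 R) with
      (run prog lam (2 + f) (if Z.eqb (R 13) (R 14) then 37 else 35) R).
    rewrite H13, H14. destruct l as [|l].
    + change (Z.eqb (Z.of_nat 0) 0) with true. stepc. rewrite H15. change [Z.of_nat x] with (map Z.of_nat [x]). rewrite mexZ_nat. reflexivity.
    + replace (Z.eqb (Z.of_nat (S l)) 0) with false by (symmetry; apply Z.eqb_neq; lia).
      stepc. rewrite H15, H16. change [Z.of_nat y; Z.of_nat x] with (map Z.of_nat [y; x]).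
      rewrite mexZ_nat. reflexivity.
Qed.

Lemma par_mod m : par m = m mod 2.
Proof.
  induction m as [m IH] using lt_wf_ind. destruct m as [|[|m]]; try reflexivity.
  replace (par (S (S m))) with (par m) by (rewrite !par_S; unfold par; destruct (Nat.odd m); reflexivity).
  rewrite IH by lia. replace (S (S m)) with (m + 1 * 2) by lia. rewrite Nat.Div0.mod_add. reflexivity.
Qed.

Lemma parZ a : Z.modulo (Z.sub (Z.of_nat (S a)) 1) 2 = Z.of_nat (par a).
Proof.
  rewrite par_mod. replace (Z.sub (Z.of_nat (S a)) 1) with (Z.of_nat a) by lia.
  rewrite Nat2Z.inj_mod. reflexivity.
Qed.

Lemma part_Pt n lam : is_partition n lam -> Pt lam.
Proof.
  intros [H1 [H2 _]]. split; [apply Forall_forall; auto|].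
  assert (Hs : forall i, nth (S i) lam 0 <= nth i lam 0).
  { intro i. destruct (Nat.lt_ge_cases (S i) (length lam)); auto.
    rewrite (nth_overflow lam 0 (n := S i)) by lia. lia. }
  intros i j Hij. induction Hij; auto. specialize (Hs m). lia.
Qed.

Theorem mainTheorem14 :
  exists (p : list instr) (C : nat),
    forall (n : nat) (lam : list nat),
      1 <= n -> is_partition n lam ->
      run p lam (C * (Nat.log2 (length lam) + 1)) 0
          (init_regs (length lam) n)
      = Some (Z.of_nat (SG lam)).
Proof.
  exists prog, 60. intros n lam Hn Hpart.
  assert (Hp := part_Pt _ _ Hpart).
  assert (HNI := Pt_NI _ Hp).
  set (r := length lam).
  assert (Hr : 1 <= r).
  { destruct Hpart as [_ [_ Hs]]. unfold r. destruct lam; simpl in *; lia. }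
  set (K := Nat.log2 r + 1).
  assert (HK : r <= 2 ^ K).
  { unfold K. rewrite Nat.add_1_r. pose proof (Nat.log2_spec r ltac:(lia)) as [_ Hs]. lia. }
  assert (Hover : forall k, r + 1 <= k -> nth (k - 1) lam 0 = 0).
  { intros k Hk. apply nth_overflow. unfold r in Hk. lia. }
  set (R0 := init_regs r n).
  destruct (seg_init lam R0) as (R1 & Hr1 & R1_2 & R1_3 & R1_9 & R1_6 & R1_7 & R1_8 & R1_0).
  assert (Hmono1 : forall j k, 1 <= j -> j <= k -> Pk lam 1 0 k -> Pk lam 1 0 j).
  { unfold Pk. intros j k Hj Hjk H. assert (nth (k-1) lam 0 <= nth (j-1) lam 0) by (apply HNI; lia). lia. }
  assert (A1 : R1 3 = Z.of_nat (r + 1)) by (rewrite R1_3; unfold R0, init_regs; lia).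
  assert (A2 : Pk lam 1 0 1) by (unfold Pk; simpl; apply (Pt_len lam 0 Hp); unfold r in Hr; lia).
  assert (A3 : forall k, r + 1 <= k -> ~ Pk lam 1 0 k) by (intros k Hk; unfold Pk; rewrite Hover by lia; lia).
  destruct (loop lam 1 0 Hmono1 K 1 (r + 1) R1 ltac:(lia) ltac:(lia) ltac:(lia) R1_2 A1 R1_9
     ltac:(rewrite R1_6; reflexivity) ltac:(rewrite R1_7; reflexivity) A2 A3)
    as (N1 & R2 & d & HN1 & Hr2 & R2_2 & Pd & Pd1 & HE2).
  unfold Pk in Pd, Pd1. simpl in Pd. replace (d + 1 - 1) with d in Pd1 by lia.
  assert (Hd1 : 1 <= d).
  { destruct d; [|lia]. simpl in Pd. pose proof (Pt_len lam 0 Hp). unfold r in Hr. simpl in Pd1. lia. }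
  assert (Hdr : d <= r).
  { destruct (Nat.le_gt_cases d r); auto. rewrite Hover in Pd by lia. lia. }
  assert (Hst1 : reach lam 1 18 R2 19 R2).
  { intro f. rewrite seg5. rewrite !HE2 by lia. rewrite R1_8, R1_9. reflexivity. }
  destruct (seg6 lam R2) as (R3 & Hr3 & R3_2 & R3_3 & R3_9 & R3_6 & R3_7 & R3_8 & R3_0 & R3_10).
  assert (Hmono2 : forall j k, 1 <= j -> j <= k -> Pk lam 0 d k -> Pk lam 0 d j).
  { unfold Pk. intros j k Hj Hjk H. assert (nth (k-1) lam 0 <= nth (j-1) lam 0) by (apply HNI; lia). lia. }
  assert (B1 : R3 2 = Z.of_nat d) by (rewrite R3_2, R2_2; reflexivity).
  assert (B2 : R3 3 = Z.of_nat (r + 1)) by (rewrite R3_3, !HE2 by lia; rewrite R1_9, R1_0; unfold R0, init_regs; lia).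
  assert (B3 : R3 9 = 1%Z) by (rewrite R3_9, HE2, R1_9 by lia; reflexivity).
  assert (B4 : R3 7 = Z.of_nat d) by (rewrite R3_7, R2_2; reflexivity).
  assert (B5 : Pk lam 0 d d) by (unfold Pk; lia).
  assert (B6 : forall k, r + 1 <= k -> ~ Pk lam 0 d k) by (intros k Hk; unfold Pk; rewrite Hover by lia; lia).
  destruct (loop lam 0 d Hmono2 K d (r + 1) R3 ltac:(lia) ltac:(lia) ltac:(lia) B1 B2 B3
     ltac:(rewrite R3_6; reflexivity) B4 B5 B6)
    as (N2 & R4 & L & HN2 & Hr4 & R4_2 & PL & PL1 & HE4).
  unfold Pk in PL, PL1. simpl in PL, PL1. replace (L + 1 - 1) with L in PL1 by lia.
  assert (HdL : d <= L).
  { destruct (Nat.le_gt_cases d L); auto. exfalso.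
    assert (nth (d - 1) lam 0 <= nth L lam 0) by (apply HNI; lia). lia. }
  assert (Hst2 : reach lam 1 18 R4 25 R4).
  { intro f. rewrite seg5. rewrite !HE4 by lia. rewrite R3_8, R3_9, HE2, R1_9 by lia. reflexivity. }
  destruct (seg7 lam R4) as (R5 & Hr5 & R5_12 & R5_13 & R5_14 & R5_15 & R5_16).
  assert (E10 : R4 10 = Z.of_nat d) by (rewrite HE4, R3_10, R2_2 by lia; reflexivity).
  assert (E9 : R4 9 = 1%Z) by (rewrite HE4, R3_9, HE2, R1_9 by lia; reflexivity).
  set (a := nth (d - 1) lam 0 - d).
  set (l := L - d).
  assert (Ea : R5 12 = Z.of_nat a).
  { rewrite R5_12, E10, read_nat by lia. unfold a. lia. }
  assert (El : R5 13 = Z.of_nat l).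
  { rewrite R5_13, E10, R4_2. unfold l. lia. }
  assert (Hall : reach lam (6 + N1 + 1 + 6 + N2 + 1 + 8) 0 R0 33 R5).
  { repeat eapply reach_trans; eauto. }
  assert (Hfin : forall f, run prog lam (4 + f) 33 R5 = Some (Z.of_nat (F a l))).
  { intro f. unfold F.
    destruct a as [|a'] eqn:Ha; destruct l as [|l'] eqn:Hl.
    - apply (seg_final lam R5 0 0 (Z.to_nat (R5 15)) (Z.to_nat (R5 16))); auto;
        rewrite Z2Nat.id; auto; [rewrite R5_15|rewrite R5_16]; apply Z.mod_pos_bound; lia.
    - apply (seg_final lam R5 0 (S l') (Z.to_nat (R5 15)) (par (S l' - 1))); auto.
      rewrite Z2Nat.id; auto; rewrite R5_15; apply Z.mod_pos_bound; lia.
      rewrite R5_16, <- R5_13, El. simpl. rewrite E9. replace (l' - 0) with l' by lia. apply parZ.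
    - apply (seg_final lam R5 (S a') 0 (par (S a' - 1)) (Z.to_nat (R5 16))); auto.
      2: rewrite Z2Nat.id; auto; rewrite R5_16; apply Z.mod_pos_bound; lia.
      rewrite R5_15, <- R5_12, Ea, E9. simpl. replace (a' - 0) with a' by lia. apply parZ.
    - apply (seg_final lam R5 (S a') (S l') (par (S a' - 1)) (par (S l' - 1))); auto.
      + rewrite R5_15, <- R5_12, Ea, E9. simpl. replace (a' - 0) with a' by lia. apply parZ.
      + rewrite R5_16, <- R5_13, El. simpl. rewrite E9. replace (l' - 0) with l' by lia. apply parZ. }
  rewrite (SG_formula lam d L Hp Hd1); try lia.
  fold a l.
  replace (60 * K) with ((6 + N1 + 1 + 6 + N2 + 1 + 8) + (4 + (60 * K - (6 + N1 + 1 + 6 + N2 + 1 + 8) - 4)))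
    by (unfold K in *; lia).
  rewrite Hall. apply Hfin.
Qed.
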